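(* Let $d\ge 3$ and for $x,y,z\in\mathbb S^{d-1}$ let $V(x,y,z)$ be the volume of the parallelepiped spanned by the vectors $x,y,z$, so that $V^2(x,y,z)=1-\langle y,z\rangle^2-\langle x,z\rangle^2-\langle x,y\rangle^2+2\langle y,z\rangle\langle x,z\rangle\langle x,y\rangle$. Then every isotropic probability measure on $\mathbb S^{d-1}$ maximizes $I_{V^2}(\mu)=\iiint V^2(x,y,z)\,d\mu(x)d\mu(y)d\mu(z)$ over $\mu\in\mathcal P(\mathbb S^{d-1})$.
   Context: $\mathbb S^{d-1}$ is the unit sphere in $\mathbb R^d$ and $\mathcal P(\mathbb S^{d-1})$ the set of Borel probability measures on it. $\mu$ is isotropic if $\int xx^T\,d\mu(x)=\frac1d I_d$. *)

(* Defs.v *)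
From HB Require Import structures.
From mathcomp Require Import all_boot all_order all_algebra.
From mathcomp Require Import all_classical all_reals all_analysis.
Set Implicit Arguments. Unset Strict Implicit. Unset Printing Implicit Defensive.
Import Order.TTheory GRing.Theory Num.Theory.
Import numFieldNormedType.Exports.
Local Open Scope classical_set_scope.
Local Open Scope ring_scope.

Definition Rd (R : realType) (d : nat) : measurableType _ :=
  g_sigma_algebraType (@open 'rV[R]_d).

Definition ip (R : realType) (d : nat) (x y : 'rV[R]_d) : R :=
  \sum_(i < d) x 0 i * y 0 i.

Definition sphere (R : realType) (d : nat) : set (Rd R d) :=
  [set x : 'rV[R]_d | ip x x = 1].

(* squared volume of the parallelepiped spanned by x, y, z (on the sphere) *)
Definition V2 (R : realType) (d : nat) (x y z : 'rV[R]_d) : R :=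
  1 - (ip y z) ^+ 2 - (ip x z) ^+ 2 - (ip x y) ^+ 2
    + 2 * ip y z * ip x z * ip x y.

Definition I_V2 (R : realType) (d : nat) (mu : {measure set (Rd R d) -> \bar R})
  : \bar R :=
  (\int[mu]_x \int[mu]_y \int[mu]_z (V2 x y z)%:E)%E.

(* isotropy: \int x x^T dmu = (1/d) I_d, written entrywise *)
Definition isotropic (R : realType) (d : nat) (mu : {measure set (Rd R d) -> \bar R})
  : Prop :=
  forall i j : 'I_d,
    (\int[mu]_x (x 0 i * x 0 j)%:E)%E = (((i == j)%:R / d%:R : R)%:E).

(* Main.v *)
Require Import Defs.
From HB Require Import structures.
From mathcomp Require Import all_boot all_order all_algebra.
From mathcomp Require Import all_classical all_reals all_analysis.
From mathcomp Require Import ring lra measurable_realfun.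
Import Order.TTheory GRing.Theory Num.Theory.
Import numFieldNormedType.Exports.
Local Open Scope classical_set_scope.
Local Open Scope ring_scope.

Lemma mcoord (R : realType) (d : nat) (i : 'I_d) :
  measurable_fun setT (fun x : Rd R d => x 0 i).
Proof.
apply: (measurability _ (measurable_realfun.RGenOpens.measurableE R)).
move=> _ [_ [a [b ->] <-]]; rewrite setTI.
apply: sub_sigma_algebra.
have h : continuous (fun M : 'M[R]_(1,d) => M 0 i) := @coord_continuous R 1 d 0 i.
have h2 := proj1 (continuousP _) h.
apply: h2; exact: interval_open.
Qed.

Lemma mZ (R : realType) (d : nat) (i j : 'I_d) :
  measurable_fun setT (fun x : Rd R d => x 0 i * x 0 j).
Proof. by apply: measurable_funM; exact: mcoord. Qed.

Lemma mip (R : realType) (d : nat) :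
  measurable_fun setT (fun x : Rd R d => ip x x).
Proof. by rewrite /ip; apply: measurable_sum => i; exact: mZ. Qed.

Lemma msphere (R : realType) (d : nat) : measurable (@sphere R d).
Proof.
have := @mip R d measurableT _ (measurable_set1 1); rewrite setTI.
by [].
Qed.

Lemma nullC (R : realType) (d : nat) (nu : probability (Rd R d) R)
  (hnu : nu (@sphere R d) = 1%E) : nu (~` (@sphere R d)) = 0%E.
Proof. rewrite probability_setC; last exact: msphere. by rewrite hnu subee. Qed.

Lemma ip_ge0 {R : realType} {d : nat} (x : 'rV[R]_d) : 0 <= ip x x.
Proof. by rewrite /ip; apply: sumr_ge0 => i _; rewrite -expr2 sqr_ge0. Qed.

Lemma int_ip (R : realType) (d : nat) (nu : probability (Rd R d) R)
  (hnu : nu (@sphere R d) = 1%E) :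
  (\int[nu]_x (ip x x)%:E = 1)%E.
Proof.
rewrite (ae_eq_integral (cst 1%E)) //.
- by rewrite integral_cst // mul1e; exact: probability_setT.
- by apply/measurable_EFinP; exact: mip.
exists (~` (@sphere R d)); split => //.
- by apply: measurableC; exact: msphere.
- exact: nullC.
by move=> x /= h; apply: contra_not h => sx _; rewrite /cst sx.
Qed.

Lemma coord_le {R : realType} {d : nat} (x : 'rV[R]_d) (i : 'I_d) :
  x 0 i ^+ 2 <= ip x x.
Proof.
rewrite /ip (bigD1 i) //= expr2 lerDl; apply: sumr_ge0 => k _.
by rewrite -expr2 sqr_ge0.
Qed.

Lemma absZ_le {R : realType} {d : nat} (x : 'rV[R]_d) (i j : 'I_d) :
  `|x 0 i * x 0 j| <= ip x x.
Proof.
have hi := coord_le x i; have hj := coord_le x j.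
rewrite normrM.
have : `|x 0 i| * `|x 0 j| <= (x 0 i ^+ 2 + x 0 j ^+ 2) / 2.
  rewrite -[x 0 i ^+ 2]real_normK ?num_real // -[x 0 j ^+ 2]real_normK ?num_real //.
  have := normr_ge0 (x 0 i); have := normr_ge0 (x 0 j).
  move: (`|x 0 i|) (`|x 0 j|) => a b ha hb; have := sqr_ge0 (a - b); nra.
lra.
Qed.

Lemma intZ (R : realType) (d : nat) (nu : probability (Rd R d) R)
  (hnu : nu (@sphere R d) = 1%E) (i j : 'I_d) :
  nu.-integrable setT (fun x => (x 0 i * x 0 j)%:E).
Proof.
apply: (@le_integrable _ _ _ nu setT measurableT _ (fun x => (ip x x)%:E)).
- by apply/measurable_EFinP; exact: mZ.
- move=> x _; rewrite !abse_EFin lee_fin [X in _ <= X]ger0_norm ?ip_ge0 //; exact: absZ_le.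
apply/integrableP; split; first by apply/measurable_EFinP; exact: mip.
under eq_integral do rewrite abse_EFin ger0_norm ?ip_ge0 //.
by rewrite int_ip // ltry.
Qed.

Definition Mx {R : realType} {d : nat} (nu : probability (Rd R d) R) : 'M[R]_d :=
  \matrix_(i, j) fine (\int[nu]_x (x 0 i * x 0 j)%:E)%E.

Definition Q {R : realType} {d : nat} (B C : 'M[R]_d) : R :=
  \sum_i \sum_j B i j * C i j.

Definition pr {R : realType} {d : nat} (a b : 'rV[R]_d) : 'M[R]_d :=
  \matrix_(i, j) (a 0 i * b 0 j).

Lemma MxE (R : realType) (d : nat) (nu : probability (Rd R d) R)
  (hnu : nu (@sphere R d) = 1%E) (i j : 'I_d) :
  (\int[nu]_x (x 0 i * x 0 j)%:E)%E = (Mx nu i j)%:E.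
Proof.
rewrite mxE fineK //; apply: integrable_fin_num => //; exact: intZ.
Qed.

Lemma int_quad (R : realType) (d : nat) (nu : probability (Rd R d) R)
  (hnu : nu (@sphere R d) = 1%E) (c : R) (B : 'M[R]_d) :
  (\int[nu]_z (c + Q B (pr z z))%:E)%E = (c + Q B (Mx nu))%:E.
Proof.
have intT : forall i j, nu.-integrable setT
    (fun z : Rd R d => ((B i j)%:E * (z 0 i * z 0 j)%:E)%E).
  by move=> i j; apply: integrableZl => //; exact: intZ.
transitivity (\int[nu]_z ((cst c%:E) z +
   \sum_i \sum_j ((B i j)%:E * (z 0 i * z 0 j)%:E)%E)%E)%E.
  apply: eq_integral => z _; rewrite EFinD /Q -sumEFin; congr (_ + _)%E.
  apply: eq_bigr => i _; rewrite -sumEFin; apply: eq_bigr => j _.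
  by rewrite mxE EFinM.
rewrite (integralD measurableT); last 2 first.
- exact: finite_measure_integrable_cst.
- apply: (integrable_sum measurableT) => i _; apply: (integrable_sum measurableT) => j _; exact: intT.
rewrite integral_cst //.
have -> : forall m : \bar R, m = 1%E -> (c%:E * m = c%:E)%E by move=> m ->; rewrite mule1.
  rewrite (integral_sum measurableT); last first.
  by move=> i; apply: (integrable_sum measurableT) => j _; exact: intT.
rewrite EFinD /Q -sumEFin; congr (_ + _)%E; apply: eq_bigr => i _.
rewrite (integral_sum measurableT) // -sumEFin; apply: eq_bigr => j _.
by rewrite integralZl ?MxE // ?EFinM //; exact: intZ.
exact: probability_setT.
Qed.

Lemma prod_ip {R : realType} {d : nat} (a b z : 'rV[R]_d) :
  ip a z * ip b z = Q (pr a b) (pr z z).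
Proof.
rewrite /ip /Q big_distrlr /=; apply: eq_bigr => i _; apply: eq_bigr => j _.
by rewrite !mxE; ring.
Qed.

Lemma Q_lin3 {R : realType} {d : nat} (a b c : R) (B C D W : 'M[R]_d) :
  Q (a *: B + b *: C + c *: D) W = a * Q B W + b * Q C W + c * Q D W.
Proof.
rewrite /Q !mulr_sumr -!big_split /=; apply: eq_bigr => i _.
rewrite !mulr_sumr -!big_split /=; apply: eq_bigr => j _.
by rewrite !mxE; ring.
Qed.

Lemma QC {R : realType} {d : nat} (B C : 'M[R]_d) : Q B C = Q C B.
Proof. by rewrite /Q; apply: eq_bigr => i _; apply: eq_bigr => j _; rewrite mulrC. Qed.

Lemma Q_pr {R : realType} {d : nat} (a b : 'rV[R]_d) (C : 'M[R]_d) :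
  Q (pr a b) C = ip a (b *m C^T).
Proof.
rewrite /Q /ip; apply: eq_bigr => i _; rewrite mxE mulr_sumr.
by apply: eq_bigr => j _; rewrite !mxE; ring.
Qed.

Lemma ipC {R : realType} {d : nat} (a b : 'rV[R]_d) : ip a b = ip b a.
Proof. by rewrite /ip; apply: eq_bigr => i _; rewrite mulrC. Qed.

Lemma lev1 {R : realType} {d : nat} (x y z : 'rV[R]_d) :
  V2 x y z = (1 - ip x y ^+ 2) +
    Q ((-1) *: pr y y + (-1) *: pr x x + (2 * ip x y) *: pr y x) (pr z z).
Proof. rewrite Q_lin3 -!prod_ip /V2; ring. Qed.

Lemma lev2 {R : realType} {d : nat} (M : 'M[R]_d) (x y : 'rV[R]_d) :
  (1 - ip x y ^+ 2) +
    Q ((-1) *: pr y y + (-1) *: pr x x + (2 * ip x y) *: pr y x) M =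
  (1 - Q (pr x x) M) +
    Q ((-1) *: pr x x + (-1) *: M + 2 *: pr x (x *m M^T)) (pr y y).
Proof.
rewrite !Q_lin3 [Q (pr y x) M]Q_pr -prod_ip [ip y (x *m M^T)]ipC -prod_ip.
rewrite [Q (pr y y) M]QC; ring.
Qed.

Lemma lev3 {R : realType} {d : nat} (M : 'M[R]_d) (x : 'rV[R]_d) :
  (1 - Q (pr x x) M) +
    Q ((-1) *: pr x x + (-1) *: M + 2 *: pr x (x *m M^T)) M =
  (1 - Q M M) + Q ((-2) *: M + 0 *: M + 2 *: (M *m M)) (pr x x).
Proof.
rewrite !Q_lin3 [Q (pr x (x *m M^T)) M]Q_pr -mulmxA -trmx_mul -Q_pr.
rewrite [Q M (pr x x)]QC [Q (M *m M) (pr x x)]QC; ring.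
Qed.

Lemma lev4 {R : realType} {d : nat} (M : 'M[R]_d) :
  (1 - Q M M) + Q ((-2) *: M + 0 *: M + 2 *: (M *m M)) M =
  1 - 3 * Q M M + 2 * Q (M *m M) M.
Proof. rewrite Q_lin3; ring. Qed.

Lemma IV2E (R : realType) (d : nat) (nu : probability (Rd R d) R)
  (hnu : nu (@sphere R d) = 1%E) :
  I_V2 nu = (1 - 3 * Q (Mx nu) (Mx nu) + 2 * Q (Mx nu *m Mx nu) (Mx nu))%:E.
Proof.
rewrite /I_V2.
transitivity (\int[nu]_x \int[nu]_y ((1 - ip x y ^+ 2) +
    Q ((-1) *: pr y y + (-1) *: pr x x + (2 * ip x y) *: pr y x) (Mx nu))%:E)%E.
  apply: eq_integral => x _; apply: eq_integral => y _.
  under eq_integral => z _ do rewrite lev1.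
  exact: int_quad.
under eq_integral => x _ do under eq_integral => y _ do rewrite lev2.
under eq_integral => x _ do rewrite int_quad // lev3.
by rewrite int_quad // lev4.
Qed.

Lemma Q_scal_l {R : realType} {d : nat} (a : R) (C : 'M[R]_d) :
  Q (a%:M) C = a * \tr C.
Proof.
rewrite /Q /mxtrace mulr_sumr; apply: eq_bigr => i _.
rewrite (bigD1 i) //= big1 ?addr0; first by rewrite !mxE eqxx mulr1n.
by move=> j /negPf ji; rewrite !mxE eq_sym ji mulr0n mul0r.
Qed.

Lemma Q_scal_r {R : realType} {d : nat} (a : R) (C : 'M[R]_d) :
  Q C (a%:M) = a * \tr C.
Proof. by rewrite QC Q_scal_l. Qed.

Lemma tr_pr {R : realType} {d : nat} (a b : 'rV[R]_d) : \tr (pr a b) = ip a b.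
Proof. by rewrite /mxtrace /ip; apply: eq_bigr => i _; rewrite mxE. Qed.

Lemma lagrange {R : realType} {d : nat} (v z : 'rV[R]_d) :
  ip v z ^+ 2 <= ip v v * ip z z.
Proof.
have h : \sum_i \sum_j (v 0 i * z 0 j - v 0 j * z 0 i) ^+ 2 =
   ip v v * ip z z + ip z z * ip v v - 2 * (ip v z * ip v z).
  rewrite /ip !big_distrlr /= mulr_sumr -big_split -sumrB; apply: eq_bigr => i _.
  rewrite mulr_sumr -big_split -sumrB; apply: eq_bigr => j _ /=; ring.
have : 0 <= \sum_i \sum_j (v 0 i * z 0 j - v 0 j * z 0 i) ^+ 2.
  by apply: sumr_ge0 => i _; apply: sumr_ge0 => j _; exact: sqr_ge0.
rewrite h expr2; lra.
Qed.

Lemma Mx_sym (R : realType) (d : nat) (nu : probability (Rd R d) R) :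
  (Mx nu)^T = Mx nu.
Proof.
apply/matrixP => i j; rewrite !mxE; congr fine.
by apply: eq_integral => x _; rewrite mulrC.
Qed.

Lemma Mx_tr (R : realType) (d : nat) (nu : probability (Rd R d) R)
  (hnu : nu (@sphere R d) = 1%E) : \tr (Mx nu) = 1.
Proof.
have h := @int_quad _ _ nu hnu 0 1%:M.
rewrite (eq_integral (fun z : Rd R d => (ip z z)%:E)) in h; last first.
  by move=> z _; rewrite add0r Q_scal_l mul1r tr_pr.
by move: h; rewrite int_ip // add0r Q_scal_l mul1r => -[].
Qed.

Lemma Mx_psd0 (R : realType) (d : nat) (nu : probability (Rd R d) R)
  (hnu : nu (@sphere R d) = 1%E) (v : 'rV[R]_d) : 0 <= Q (pr v v) (Mx nu).
Proof.
have h := @int_quad _ _ nu hnu 0 (pr v v).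
have : (0 <= \int[nu]_z (0 + Q (pr v v) (pr z z))%:E)%E.
  apply: integral_ge0 => z _; rewrite lee_fin add0r -prod_ip -expr2.
  exact: sqr_ge0.
by rewrite h lee_fin add0r.
Qed.

Lemma Mx_psd1 (R : realType) (d : nat) (nu : probability (Rd R d) R)
  (hnu : nu (@sphere R d) = 1%E) (v : 'rV[R]_d) :
  Q (pr v v) (Mx nu) <= ip v v.
Proof.
have h := @int_quad _ _ nu hnu 0 ((ip v v) *: 1%:M + (-1) *: pr v v + 0 *: pr v v).
have : (0 <= \int[nu]_z (0 + Q ((ip v v) *: 1%:M + (-1) *: pr v v + 0 *: pr v v)
                               (pr z z))%:E)%E.
  apply: integral_ge0 => z _; rewrite lee_fin add0r Q_lin3 Q_scal_l tr_pr.
  rewrite -prod_ip mul1r -expr2.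
  have := lagrange v z; lra.
rewrite h lee_fin add0r Q_lin3 Q_scal_l Mx_tr // mul1r mulr1; lra.
Qed.

Lemma Mx_iso (R : realType) (d : nat) (mu : probability (Rd R d) R)
  (hiso : isotropic mu) : Mx mu = (d%:R^-1)%:M.
Proof.
apply/matrixP => i j; rewrite !mxE hiso /=.
by case: (i == j); rewrite ?mulr1n ?mulr0n ?mul1r ?mul0r.
Qed.

Lemma QDl {R : realType} {d : nat} (B C D : 'M[R]_d) : Q (B + C) D = Q B D + Q C D.
Proof.
rewrite /Q -big_split; apply: eq_bigr => i _; rewrite -big_split.
by apply: eq_bigr => j _; rewrite !mxE mulrDl.
Qed.

Lemma QNl {R : realType} {d : nat} (B D : 'M[R]_d) : Q (- B) D = - Q B D.
Proof.
rewrite /Q -sumrN; apply: eq_bigr => i _; rewrite -sumrN.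
by apply: eq_bigr => j _; rewrite !mxE mulNr.
Qed.

Lemma QZl {R : realType} {d : nat} (a : R) (B D : 'M[R]_d) : Q (a *: B) D = a * Q B D.
Proof.
rewrite /Q mulr_sumr; apply: eq_bigr => i _; rewrite mulr_sumr.
by apply: eq_bigr => j _; rewrite !mxE mulrA.
Qed.

Lemma QBl {R : realType} {d : nat} (B C D : 'M[R]_d) : Q (B - C) D = Q B D - Q C D.
Proof. by rewrite QDl QNl. Qed.
Lemma QDr {R : realType} {d : nat} (B C D : 'M[R]_d) : Q D (B + C) = Q D B + Q D C.
Proof. by rewrite QC QDl !(QC D). Qed.
Lemma QBr {R : realType} {d : nat} (B C D : 'M[R]_d) : Q D (B - C) = Q D B - Q D C.
Proof. by rewrite QC QBl !(QC D). Qed.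
Lemma QNr {R : realType} {d : nat} (B D : 'M[R]_d) : Q D (- B) = - Q D B.
Proof. by rewrite QC QNl QC. Qed.
Lemma QZr {R : realType} {d : nat} (a : R) (B D : 'M[R]_d) : Q D (a *: B) = a * Q D B.
Proof. by rewrite QC QZl QC. Qed.

Lemma Q_tr {R : realType} {d : nat} (B C : 'M[R]_d) : \tr (B *m C) = Q B C^T.
Proof.
rewrite /mxtrace /Q; apply: eq_bigr => i _; rewrite mxE.
by apply: eq_bigr => j _; rewrite !mxE.
Qed.

Lemma rowsum {R : realType} {d : nat} (A B : 'M[R]_d) :
  \sum_k Q (pr (row k A) (row k A)) B = Q (A^T *m A) B.
Proof.
rewrite /Q; symmetry.
under eq_bigr do under eq_bigr do rewrite !mxE mulr_suml.
under eq_bigr do rewrite exchange_big.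
rewrite exchange_big; apply: eq_bigr => k _; apply: eq_bigr => i _.
by apply: eq_bigr => j _; rewrite !mxE.
Qed.

Lemma trN {R : realType} {d : nat} (A : 'M[R]_d) : \tr (- A) = - \tr A.
Proof. by rewrite -scaleN1r mxtraceZ mulN1r. Qed.

Lemma key4 {R : realType} {d : nat} (hd : (4 <= d)%N) (M : 'M[R]_d)
  (sym : M^T = M) (tr1 : \tr M = 1)
  (psd1 : forall v, Q (pr v v) M <= ip v v) :
  1 - 3 * Q M M + 2 * Q (M *m M) M <= 1 - 3 * d%:R^-1 + 2 * d%:R^-1 ^+ 2.
Proof.
set s := d%:R^-1.
have D4 : 4 <= d%:R :> R by rewrite (ler_nat R 4 d).
have Dn0 : d%:R != 0 :> R by rewrite pnatr_eq0 -lt0n; apply: leq_trans hd.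
have hs : s * d%:R = 1 by rewrite mulVf.
have s0 : 0 < s by rewrite invr_gt0; lra.
have s4 : 4 * s <= 1 by nra.
clearbody s.
set A := M - s%:M.
set P := (3 - 4 * s)%:M - 2 *: M.
have psdP : forall v, 0 <= Q (pr v v) P.
  move=> v; rewrite /P QBr QZr Q_scal_r tr_pr.
  have := psd1 v; have := ip_ge0 v.
  have := @mulr_ge0 _ (1 - 4 * s) (ip v v); nra.
have sum0 : 0 <= \sum_k Q (pr (row k A) (row k A)) P.
  by apply: sumr_ge0 => k _; exact: psdP.
have AA : A^T *m A = M *m M - (2 * s) *: M + (s * s)%:M.
  have At : A^T = A.
    apply/matrixP => i j; rewrite /A !mxE eq_sym; congr (_ - _).
    by rewrite -{2}sym mxE.
  rewrite At /A mulmxBl !mulmxBr mul_mx_scalar mul_scalar_mx.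
  rewrite mul_scalar_mx scale_scalar_mx.
  apply/matrixP => i j; rewrite !mxE; ring.
have trMM : \tr (M *m M) = Q M M by rewrite Q_tr sym.
rewrite rowsum AA /P !(QDl, QBl, QZl, QDr, QBr, QZr, Q_scal_l, Q_scal_r) in sum0.
rewrite !(QNl, QNr, QZl, QZr) in sum0.
rewrite trMM !trN !mxtraceZ tr1 !mxtrace_scalar in sum0.
have e : s * s * ((3 - 4 * s) *+ d) = s * (3 - 4 * s).
  rewrite -[(3 - 4 * s) *+ d]mulr_natr.
  have -> : s * s * ((3 - 4 * s) * d%:R) = s * (3 - 4 * s) * (s * d%:R) by ring.
  by rewrite hs mulr1.
rewrite e in sum0.
nra.
Qed.

Lemma sum3 {R : realType} (F : 'I_3 -> R) :
  \sum_i F i = F (@Ordinal 3 0 isT) + F (@Ordinal 3 1 isT) + F (@Ordinal 3 2 isT).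
Proof.
rewrite !big_ord_recl big_ord0 addr0 addrA.
by congr (F _ + F _ + F _); apply/val_inj.
Qed.

Lemma amgm3 {R : realType} (a b c : R) : 0 <= a -> 0 <= b -> 0 <= c ->
  a + b + c = 1 -> a * b * c <= 1 / 27.
Proof.
move=> ha hb hc h.
have e : 2 * ((a + b + c) ^+ 3 - 27 * (a * b * c)) =
  (a + b + c) * ((a - b) ^+ 2 + (b - c) ^+ 2 + (a - c) ^+ 2) +
  6 * (a * (b - c) ^+ 2 + b * (a - c) ^+ 2 + c * (a - b) ^+ 2) by ring.
have : 0 <= 2 * ((a + b + c) ^+ 3 - 27 * (a * b * c)).
  rewrite e; apply: addr_ge0.
    by apply: mulr_ge0; [lra | rewrite !addr_ge0 // sqr_ge0].
  apply: mulr_ge0; first by [].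
  by rewrite !addr_ge0 // mulr_ge0 // sqr_ge0.
rewrite h expr1n; lra.
Qed.

Lemma hadamard3 {R : realType} (a b c p q r : R) : 0 <= a -> 0 <= b -> 0 <= c ->
  p ^+ 2 <= a * b -> q ^+ 2 <= a * c ->
  2 * p * q * r <= a * r ^+ 2 + b * q ^+ 2 + c * p ^+ 2.
Proof.
move=> ha hb hc hab hac.
have [a0|apos] := eqVneq a 0.
  have p0 : p = 0 by apply/eqP; rewrite -sqrf_eq0 eq_le sqr_ge0 andbT; move: hab; rewrite a0 mul0r.
  have q0 : q = 0 by apply/eqP; rewrite -sqrf_eq0 eq_le sqr_ge0 andbT; move: hac; rewrite a0 mul0r.
  rewrite p0 q0 a0; nra.
have a_gt0 : 0 < a by rewrite lt0r apos.
have e : a * (a * r ^+ 2 + b * q ^+ 2 + c * p ^+ 2 - 2 * p * q * r) =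
  (a * r - p * q) ^+ 2 + q ^+ 2 * (a * b - p ^+ 2) + a * c * p ^+ 2 by ring.
have : 0 <= a * (a * r ^+ 2 + b * q ^+ 2 + c * p ^+ 2 - 2 * p * q * r).
  rewrite e; apply: addr_ge0; first apply: addr_ge0.
  - exact: sqr_ge0.
  - by apply: mulr_ge0; [exact: sqr_ge0 | rewrite subr_ge0].
  - by apply: mulr_ge0; [apply: mulr_ge0 | exact: sqr_ge0].
rewrite pmulr_rge0 //; lra.
Qed.

Lemma minor2 {R : realType} (a b p : R) :
  (forall s t, 0 <= a * s ^+ 2 + 2 * p * s * t + b * t ^+ 2) ->
  0 <= a /\ 0 <= b /\ p ^+ 2 <= a * b.
Proof.
move=> h.
have ha := h 1 0; have hb := h 0 1.
have h1 := h p (- a); have h2 := h (- (b + 1)) p.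
rewrite !expr1n !expr0n /= in ha hb.
have a0 : 0 <= a by lra.
have b0 : 0 <= b by lra.
split => //; split => //.
have [a00|apos] := eqVneq a 0.
  have := mulr_ge0 b0 (sqr_ge0 p); have := sqr_ge0 p.
  rewrite a00 in h2 *; nra.
have a_gt0 : 0 < a by rewrite lt0r apos.
have : 0 <= a * (a * b - p ^+ 2) by move: h1; nra.
rewrite pmulr_rge0 //; lra.
Qed.

Lemma key3 {R : realType} (M : 'M[R]_3)
  (sym : M^T = M) (tr1 : \tr M = 1)
  (psd0 : forall v, 0 <= Q (pr v v) M) :
  1 - 3 * Q M M + 2 * Q (M *m M) M <= 1 - 3 * (3%N)%:R^-1 + 2 * (3%N)%:R^-1 ^+ 2.
Proof.
have Msym : forall i j, M i j = M j i by move=> i j; rewrite -{1}sym mxE.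
pose o0 := @Ordinal 3 0 isT; pose o1 := @Ordinal 3 1 isT; pose o2 := @Ordinal 3 2 isT.
have hv : forall s t u : R, 0 <= s * s * M o0 o0 + s * t * M o0 o1 + s * u * M o0 o2
   + (t * s * M o1 o0 + t * t * M o1 o1 + t * u * M o1 o2)
   + (u * s * M o2 o0 + u * t * M o2 o1 + u * u * M o2 o2).
  move=> s t u; have := psd0 (\row_k nth 0 [:: s; t; u] k).
  by rewrite /Q !sum3 !mxE /=.
have htr : M o0 o0 + M o1 o1 + M o2 o2 = 1.
  have := Q_scal_l 1 M; rewrite tr1 mul1r /Q !sum3 !mxE /= => <-.
  ring.
rewrite /Q !sum3 !mxE !sum3 /=.
rewrite -/o0 -/o1 -/o2 (Msym o1 o0) (Msym o2 o0) (Msym o2 o1).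
rewrite (Msym o1 o0) (Msym o2 o0) (Msym o2 o1) in hv.
move: (M o0 o0) (M o1 o1) (M o2 o2) (M o0 o1) (M o0 o2) (M o1 o2) hv htr.
move=> a b c p q r hv htr.
have [a0 [b0 hab]] : 0 <= a /\ 0 <= b /\ p ^+ 2 <= a * b.
  by apply: minor2 => s t; have := hv s t 0; nra.
have [_ [c0 hac]] : 0 <= a /\ 0 <= c /\ q ^+ 2 <= a * c.
  by apply: minor2 => s t; have := hv s 0 t; nra.
have hd := @hadamard3 R a b c p q r a0 b0 c0 hab hac.
have hm := @amgm3 R a b c a0 b0 c0 htr.
have -> : 1 - 3 / 3 + 2 * 3^-1 ^+ 2 = 2 / 9 :> R by field.
have ec : c = 1 - a - b by lra.
rewrite ec in hd hm *.
have e : forall a b p q r : R, 1 -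
  3 *
  (a * a + p * p + q * q + (p * p + b * b + r * r) + (q * q + r * r + (1 - a - b) * (1 - a - b))) +
  2 *
  ((a * a + p * p + q * q) * a + (a * p + p * b + q * r) * p +
   (a * q + p * r + q * (1 - a - b)) * q +
   ((p * a + b * p + r * q) * p + (p * p + b * b + r * r) * b +
    (p * q + b * r + r * (1 - a - b)) * r) +
   ((q * a + r * p + (1 - a - b) * q) * q + (q * p + r * b + (1 - a - b) * r) * r +
    (q * q + r * r + (1 - a - b) * (1 - a - b)) * (1 - a - b))) =
  6 * (a * b * (1 - a - b) + 2 * p * q * r - a * r ^+ 2 - b * q ^+ 2 - (1 - a - b) * p ^+ 2).
  by move=> *; ring.
rewrite e; lra.
Qed.

Lemma rhs_iso {R : realType} {d : nat} (hd : (0 < d)%N) :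
  let s := d%:R^-1 : R in
  1 - 3 * Q (s%:M : 'M[R]_d) (s%:M) + 2 * Q (s%:M *m s%:M) (s%:M : 'M[R]_d) =
  1 - 3 * s + 2 * s ^+ 2.
Proof.
move=> s.
have hs : s *+ d = 1 by rewrite -mulr_natr mulVf // pnatr_eq0 -lt0n.
rewrite mul_scalar_mx scale_scalar_mx !Q_scal_l !mxtrace_scalar hs.
by rewrite expr2 !mulr1.
Qed.

Theorem theorem4p3 (R : realType) (d : nat) (hd : (3 <= d)%N)
  (mu : probability (Rd R d) R)
  (hmu : mu (@sphere R d) = 1%E) (hiso : isotropic mu)
  (nu : probability (Rd R d) R) (hnu : nu (@sphere R d) = 1%E) :
  (I_V2 nu <= I_V2 mu)%E.
Proof.
rewrite (@IV2E _ _ nu hnu) (@IV2E _ _ mu hmu) lee_fin (@Mx_iso _ _ mu hiso).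
rewrite rhs_iso; last by apply: leq_trans hd.
have [d3|d4] : d = 3%N \/ (4 <= d)%N.
  by move: hd; rewrite leq_eqVlt => /orP[/eqP <-|]; [left|right].
- subst d; apply: key3.
  + exact: Mx_sym.
  + exact: Mx_tr.
  + by move=> v; exact: Mx_psd0.
- apply: key4 => //.
  + exact: Mx_sym.
  + exact: Mx_tr.
  + by move=> v; exact: Mx_psd1.
Qed.
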